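(* Fix $\alpha\in(0,1/6)$. Let \[ \Delta_\alpha=\Big\{(x,z)\in\mathbb{R}^2:\ x\in\big(-\tfrac{2}{\alpha}+1-3\alpha,\ 1-3\alpha\big),\ z\ge -\tfrac{2}{\alpha\pi}\log\cos\Big(\tfrac{\alpha\pi}{2}\big(x-1+3\alpha+\tfrac1\alpha\big)\Big)\Big\}, \] let $d(x,z)$ be the Euclidean distance from $(x,z)$ to $\Delta_\alpha$, let $(\Delta_\alpha)^{2\alpha}=\{(x,z):d(x,z)\le 2\alpha\}$, and define $\varphi_\alpha:\mathrm{cl}\big((\Delta_\alpha)^{2\alpha}\setminus\Delta_\alpha\big)\to\mathbb{R}$ by \[ \varphi_\alpha(x,z)=-1+2\alpha-\sqrt{4\alpha^2-d(x,z)^2}. \] Then $\varphi=\varphi_\alpha$ is a convex function satisfying \[ \frac{\det D^2\varphi}{(1+|D\varphi|^2)^{3/2}}\le-\frac{\pi}{4}\varphi_z \] on its domain (at points where the derivatives are defined).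
   Context: Here $D$ and $D^2$ denote the gradient and Hessian in the variables $(x,z)$, and $\varphi_z$ the partial derivative in $z$. *)

(* Defs.v *)
From Stdlib Require Import Reals.
From Coquelicot Require Import Coquelicot.
Open Scope R_scope.

Definition eucl (p q : R * R) : R :=
  sqrt ((fst p - fst q) ^ 2 + (snd p - snd q) ^ 2).

Definition bnd (a x : R) : R :=
  - (2 / (a * PI)) * ln (cos (a * PI / 2 * (x - 1 + 3 * a + 1 / a))).

Definition Delta (a : R) (p : R * R) : Prop :=
  - 2 / a + 1 - 3 * a < fst p < 1 - 3 * a /\ snd p >= bnd a (fst p).

Definition dist_Delta (a : R) (p : R * R) : R :=
  real (Glb_Rbar (fun r => exists q, Delta a q /\ r = eucl p q)).

Definition closure2 (S : R * R -> Prop) (p : R * R) : Prop :=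
  forall eps, 0 < eps -> exists q, S q /\ eucl p q < eps.

Definition dom_phi (a : R) : R * R -> Prop :=
  closure2 (fun p => dist_Delta a p <= 2 * a /\ ~ Delta a p).

Definition phi (a : R) (p : R * R) : R :=
  -1 + 2 * a - sqrt (4 * a ^ 2 - dist_Delta a p ^ 2).

(* convexity of f on a (possibly non-convex) set D: convex along every
   segment contained in D *)
Definition convex_on (D : R * R -> Prop) (f : R * R -> R) : Prop :=
  forall p q : R * R, D p -> D q ->
    (forall t, 0 <= t <= 1 ->
       D (t * fst p + (1 - t) * fst q, t * snd p + (1 - t) * snd q)) ->
    forall t, 0 <= t <= 1 ->
      f (t * fst p + (1 - t) * fst q, t * snd p + (1 - t) * snd q)
      <= t * f p + (1 - t) * f q.

(* Main.v *)
Require Import Defs.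
From Stdlib Require Import Reals Lra Psatz.
From Coquelicot Require Import Coquelicot.
Open Scope R_scope.

Definition line (q w : R*R) (t:R) : R*R := (fst q + t * fst w, snd q + t * snd w).

Lemma fd_line0 (q w : R*R) : is_derive (line q w) 0 w.
Proof.
  split. exact (is_linear_scal_l (K:=R_AbsRing) (V:=prod_NormedModule R_AbsRing R_NormedModule R_NormedModule) w).
  intros x Hx. intros eps. apply filter_forall. intros y.
  match goal with |- Rle (norm ?X) _ => assert (HX: X = zero) end.
  { unfold line, minus, plus, opp, scal, zero; simpl. 
    unfold prod_plus, prod_opp, prod_scal, prod_zero; simpl.
    unfold plus, opp, scal, mult, zero; simpl. unfold mult; simpl. f_equal; ring. }
  rewrite HX. unfold norm, zero; simpl. unfold prod_norm, prod_zero; simpl. unfold norm, zero; simpl. unfold abs; simpl. rewrite Rabs_R0. replace (0 * (0 * 1) + 0 * (0 * 1)) with 0 by ring. rewrite sqrt_0. apply Rmult_le_pos. destruct eps; simpl; lra. apply Rabs_pos.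
Qed.

Lemma fd_line {V : NormedModule R_AbsRing} (f : R*R -> V) q w L :
  filterdiff f (locally q) L -> is_derive (fun t => f (line q w t)) 0 (L w).
Proof.
  intros Hf.
  assert (E: line q w 0 = q) by (unfold line; destruct q; simpl; f_equal; ring).
  rewrite <- E in Hf.
  pose proof (filterdiff_comp' _ _ _ _ _ (fd_line0 q w) Hf) as H.
  unfold is_derive. eapply filterdiff_ext_lin. exact H.
  intros y. simpl. destruct Hf as [Hlin _]. apply (linear_scal L Hlin).
Qed.

Lemma fd_line_R (f : R*R -> R) q w A B :
  filterdiff f (locally q) (fun v => A * fst v + B * snd v) ->
  derivable_pt_lim (fun t => f (line q w t)) 0 (A * fst w + B * snd w).
Proof.
  intros H. apply is_derive_Reals. exact (fd_line f q w _ H).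
Qed.

Lemma fd_line_RR (F : R*R -> R*R) q w L :
  filterdiff F (locally q) L ->
  derivable_pt_lim (fun t => fst (F (line q w t))) 0 (fst (L w)) /\
  derivable_pt_lim (fun t => snd (F (line q w t))) 0 (snd (L w)).
Proof.
  intros H. pose proof (fd_line F q w L H) as D.
  split; apply is_derive_Reals.
  - pose proof (filterdiff_comp' _ (fun u : prod_NormedModule R_AbsRing R_NormedModule R_NormedModule => fst u) _ _ _ D (filterdiff_linear _ is_linear_fst)) as D1.
    unfold is_derive. eapply filterdiff_ext_lin. exact D1. intros y. reflexivity.
  - pose proof (filterdiff_comp' _ (fun u : prod_NormedModule R_AbsRing R_NormedModule R_NormedModule => snd u) _ _ _ D (filterdiff_linear _ is_linear_snd)) as D1.
    unfold is_derive. eapply filterdiff_ext_lin. exact D1. intros y. reflexivity.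
Qed.

Definition th (a x : R) := a * PI / 2 * (x - 1 + 3 * a + 1 / a).

Lemma th_range a x : 0 < a -> (- 2 / a + 1 - 3 * a < x < 1 - 3 * a <-> - (PI/2) < th a x < PI/2).
Proof.
  intros ha. unfold th. pose proof PI_RGT_0.
  assert (E: a * PI / 2 * (x - 1 + 3 * a + 1 / a) = (a*PI/2) * (x - (- 2 / a + 1 - 3 * a)) - PI/2) by (field; lra).
  assert (E2: a * PI / 2 * (x - 1 + 3 * a + 1 / a) = (a*PI/2) * (x - (1 - 3 * a)) + PI/2) by (field; lra).
  assert (0 < a*PI/2) by nra.
  split; intros [H1 H2]; split.
  - rewrite E. nra.
  - rewrite E2. nra.
  - rewrite E in H1. nra.
  - rewrite E2 in H2. nra.
Qed.

Lemma bnd_deriv a x : 0 < a -> - (PI/2) < th a x < PI/2 ->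
  derivable_pt_lim (bnd a) x (tan (th a x)).
Proof.
  intros ha Hx. pose proof PI_RGT_0.
  assert (Hc: 0 < cos (th a x)) by (apply cos_gt_0; lra).
  apply is_derive_Reals. unfold bnd.
  auto_derive.
  - unfold th in Hc. exact Hc.
  - unfold tan, th. replace (x + - (1) + 3*a + 1/a) with (x - 1 + 3*a + 1/a) by ring. unfold th in Hc. field. split; lra.
Qed.

Lemma convex_from_deriv (f f' : R->R) lo hi :
  (forall x, lo<x<hi -> derivable_pt_lim f x (f' x)) ->
  (forall x y, lo<x -> x<=y -> y<hi -> f' x <= f' y) ->
  forall x y t, lo<x<hi -> lo<y<hi -> 0<=t<=1 ->
    f (t*x+(1-t)*y) <= t*f x + (1-t)*f y.
Proof.
  intros Hd Hm.
  assert (K: forall x y t, lo<x<hi -> lo<y<hi -> 0<t<1 -> x < y ->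
    f (t*x+(1-t)*y) <= t*f x + (1-t)*f y).
  { intros x y t Hx Hy Ht Hxy.
    set (m := t*x+(1-t)*y).
    assert (Hm1: x < m) by (unfold m; nra).
    assert (Hm2: m < y) by (unfold m; nra).
    destruct (MVT_cor2 f f' x m Hm1) as [c1 [E1 Hc1]].
    { intros c Hc. apply Hd. lra. }
    destruct (MVT_cor2 f f' m y Hm2) as [c2 [E2 Hc2]].
    { intros c Hc. apply Hd. lra. }
    assert (Hf: f' c1 <= f' c2) by (apply Hm; lra).
    assert (Em1: m - x = (1-t)*(y-x)) by (unfold m; ring).
    assert (Em2: y - m = t*(y-x)) by (unfold m; ring).
    rewrite Em1 in E1. rewrite Em2 in E2.
    assert (0 <= t*(1-t)*(y-x)*(f' c2 - f' c1)).
    { apply Rmult_le_pos; [|lra]. apply Rmult_le_pos; [|lra]. nra. }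
    nra. }
  intros x y t Hx Hy Ht.
  destruct (Req_dec t 0) as [->|Ht0].
  { replace (0*x+(1-0)*y) with y by ring. lra. }
  destruct (Req_dec t 1) as [->|Ht1].
  { replace (1*x+(1-1)*y) with x by ring. lra. }
  destruct (Rtotal_order x y) as [Hxy|[Hxy|Hxy]].
  - apply K; auto; lra.
  - subst. replace (t*y+(1-t)*y) with y by ring. lra.
  - pose proof (K y x (1-t) Hy Hx ltac:(lra) Hxy).
    replace (t*x+(1-t)*y) with ((1-t)*y+(1-(1-t))*x) by ring. lra.
Qed.

Lemma bnd_convex a : 0 < a -> forall x y t,
  - (PI/2) < th a x < PI/2 -> - (PI/2) < th a y < PI/2 -> 0<=t<=1 ->
  bnd a (t*x+(1-t)*y) <= t*bnd a x + (1-t)*bnd a y.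
Proof.
  intros ha x y t Hx Hy Ht.
  apply (convex_from_deriv (bnd a) (fun x => tan (th a x)) (- 2 / a + 1 - 3 * a) (1 - 3 * a)).
  - intros z Hz. apply bnd_deriv; auto. apply th_range; auto.
  - intros u v Hu Huv Hv.
    assert (Hu': - (PI/2) < th a u < PI/2) by (apply th_range; auto; split; lra).
    assert (Hv': - (PI/2) < th a v < PI/2) by (apply th_range; auto; split; lra).
    destruct (Req_dec u v) as [->|Hne]. lra.
    left. apply tan_increasing; try lra.
    unfold th. pose proof PI_RGT_0. assert (0 < a*PI/2) by nra. 
    apply Rmult_lt_compat_l; lra.
  - apply th_range; auto.
  - apply th_range; auto.
  - auto.
Qed.

Definition mx0 (y : R) := (y + Rabs y) / 2.
Lemma mx0_ge0 y : 0 <= mx0 y. Proof. unfold mx0. unfold Rabs; destruct Rcase_abs; lra. Qed.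
Lemma mx0_ge y : y <= mx0 y. Proof. unfold mx0. unfold Rabs; destruct Rcase_abs; lra. Qed.
Lemma mx0_neg y : y <= 0 -> mx0 y = 0. Proof. unfold mx0. unfold Rabs; destruct Rcase_abs; lra. Qed.
Lemma mx0_pos y : 0 <= y -> mx0 y = y. Proof. unfold mx0. unfold Rabs; destruct Rcase_abs; lra. Qed.

Lemma glb_min (E : R -> Prop) m : E m -> (forall r, E r -> m <= r) -> real (Glb_Rbar E) = m.
Proof.
  intros Hm Hl. rewrite (is_glb_Rbar_unique E (Finite m)); [reflexivity|].
  split.
  - intros x Hx. simpl. apply Hl; auto.
  - intros l' Hl'. apply Hl'. auto.
Qed.

Lemma bnd_cont a x : 0 < a -> - (PI/2) < th a x < PI/2 -> continuity_pt (bnd a) x.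
Proof.
  intros ha Hx. apply derivable_continuous_pt. exists (tan (th a x)). apply bnd_deriv; auto.
Qed.

Lemma cos_lt_small t e : 0 < e -> PI/2 - e < Rabs t < PI/2 -> cos t < e.
Proof.
  intros He [H1 H2].
  assert (E: cos t = sin (PI/2 - Rabs t)).
  { rewrite sin_minus, sin_PI2, cos_PI2. unfold Rabs; destruct Rcase_abs.
    - rewrite cos_neg. ring.
    - ring. }
  rewrite E. apply Rlt_trans with (PI/2 - Rabs t). apply sin_lt_x. lra. lra.
Qed.

Lemma bnd_large a x B : 0 < a -> 0 < B -> - (PI/2) < th a x < PI/2 ->
  PI/2 - exp (-(a*PI/2*B)) < Rabs (th a x) -> B < bnd a x.
Proof.
  intros ha hB Hx Ht. pose proof PI_RGT_0.
  assert (Hc: 0 < cos (th a x)) by (apply cos_gt_0; lra).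
  assert (He: 0 < exp (-(a*PI/2*B))) by apply exp_pos.
  assert (Hlt: cos (th a x) < exp (-(a*PI/2*B))).
  { apply cos_lt_small; auto. split; auto. unfold Rabs; destruct Rcase_abs; lra. }
  assert (Hl: ln (cos (th a x)) < -(a*PI/2*B)).
  { rewrite <- (ln_exp (-(a*PI/2*B))). apply ln_increasing; auto. }
  unfold bnd. fold (th a x).
  assert (0 < a*PI) by nra.
  replace (- (2 / (a * PI)) * ln (cos (th a x))) with ((- ln (cos (th a x))) * (2/(a*PI))) by ring.
  apply Rmult_lt_reg_r with (a*PI/2). nra.
  replace (- ln (cos (th a x)) * (2 / (a * PI)) * (a * PI / 2)) with (- ln (cos (th a x))) by (field; lra).
  nra.
Qed.

Definition Gf a (q : R*R) x := (fst q - x)^2 + (mx0 (bnd a x - snd q))^2.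

Lemma cpt_comp (f g : R -> R) x : continuity_pt f x -> (forall y, continuity_pt g y) -> continuity_pt (fun y => g (f y)) x.
Proof. intros H1 H2. exact (continuity_pt_comp f g x H1 (H2 _)). Qed.
Lemma cpt_plus (f g : R -> R) x : continuity_pt f x -> continuity_pt g x -> continuity_pt (fun y => f y + g y) x.
Proof. intros H1 H2. exact (continuity_pt_plus f g x H1 H2). Qed.
Lemma cpt_sq y : continuity_pt (fun t => t^2) y.
Proof. apply derivable_continuous_pt. exists (2 * y ^ 1). apply is_derive_Reals. auto_derive; auto; ring. Qed.
Lemma cpt_lin (k : R) y : continuity_pt (fun t => t + k) y.
Proof. apply derivable_continuous_pt. exists 1. apply is_derive_Reals. auto_derive; auto; ring. Qed.
Lemma cpt_lin2 (k : R) y : continuity_pt (fun t => k - t) y.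
Proof. apply derivable_continuous_pt. exists (-1). apply is_derive_Reals. auto_derive; auto; ring. Qed.
Lemma cpt_mx0 y : continuity_pt mx0 y.
Proof.
  unfold mx0.
  apply (continuity_pt_mult (fun t => t + Rabs t) (fun _ => /2)).
  apply (continuity_pt_plus (fun t => t) Rabs). apply derivable_continuous_pt, derivable_pt_id.
  apply Rcontinuity_abs. apply continuity_pt_const. intros u v; reflexivity.
Qed.

Lemma Gf_cont a q x : 0 < a -> - (PI/2) < th a x < PI/2 -> continuity_pt (Gf a q) x.
Proof.
  intros ha Hx. unfold Gf.
  pose proof (bnd_cont a x ha Hx) as Hb.
  apply cpt_plus.
  - apply (cpt_comp (fun t => fst q - t) (fun t => t^2)). apply cpt_lin2. apply cpt_sq.
  - apply (cpt_comp (fun t => mx0 (bnd a t - snd q)) (fun t => t^2)); [|apply cpt_sq].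
    apply (cpt_comp (fun t => bnd a t - snd q) mx0); [|apply cpt_mx0].
    apply (cpt_comp (bnd a) (fun t => t - snd q)); auto. intros; apply cpt_lin.
Qed.

Lemma abs_le t k : Rabs t <= k -> -k <= t <= k.
Proof. unfold Rabs; destruct Rcase_abs; lra. Qed.
Lemma abs_lt t k : Rabs t < k -> -k < t < k.
Proof. unfold Rabs; destruct Rcase_abs; lra. Qed.

Lemma th_xm a x : 0 < a -> th a x = a*PI/2 * (x - (1 - 3*a - 1/a)).
Proof. intros; unfold th; field; lra. Qed.

Lemma Gf_min a q : 0 < a -> exists x0, - (PI/2) < th a x0 < PI/2 /\
  forall x, - (PI/2) < th a x < PI/2 -> Gf a q x0 <= Gf a q x.
Proof.
  intros ha. pose proof PI_RGT_0. pose proof PI_4 as HP4.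
  pose proof PI2_1.
  set (c := a*PI/2). assert (hc: 0 < c) by (unfold c; nra).
  set (xm := 1 - 3*a - 1/a).
  set (M := Gf a q xm).
  set (B := Rabs (snd q) + sqrt M + 1).
  assert (hB: 0 < B) by (unfold B; pose proof (Rabs_pos (snd q)); pose proof (sqrt_pos M); lra).
  set (e := exp (-(c*B))).
  assert (he: 0 < e < 1).
  { unfold e; split. apply exp_pos. rewrite <- exp_0. apply exp_increasing. nra. }
  set (r := (PI/2 - e)/c).
  assert (hr: 0 < r) by (unfold r; apply Rdiv_lt_0_compat; lra).
  assert (Hin: forall x, xm - r <= x <= xm + r -> Rabs (th a x) <= PI/2 - e).
  { intros x Hx. rewrite th_xm by auto. fold c. fold xm.
    rewrite Rabs_mult, (Rabs_right c) by lra.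
    apply Rle_trans with (c * r). apply Rmult_le_compat_l. lra.
    unfold Rabs; destruct Rcase_abs; lra. unfold r. right; field; lra. }
  destruct (continuity_ab_min (Gf a q) (xm - r) (xm + r)) as [x0 [Hx0 Hx0r]]. lra.
  { intros y Hy. apply Gf_cont; auto. pose proof (abs_le _ _ (Hin y Hy)). lra. }
  exists x0. split.
  { pose proof (abs_le _ _ (Hin x0 Hx0r)). lra. }
  intros x Hx.
  destruct (Rle_dec (Rabs (x - xm)) r) as [Hc|Hc].
  { apply Hx0. pose proof (abs_le _ _ Hc). lra. }
  assert (HM: Gf a q x0 <= M) by (apply Hx0; lra).
  assert (Hbig: PI/2 - e < Rabs (th a x)).
  { rewrite th_xm by auto. fold c xm. rewrite Rabs_mult, (Rabs_right c) by lra.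
    replace (PI/2 - e) with (c*r) by (unfold r; field; lra).
    apply Rmult_lt_compat_l; lra. }
  assert (Hb: B < bnd a x) by (apply bnd_large; auto).
  unfold Gf. 
  assert (Hs: 0 <= sqrt M) by apply sqrt_pos.
  assert (HMs: sqrt M * sqrt M = M).
  { apply sqrt_sqrt. unfold M, Gf. apply Rplus_le_le_0_compat; apply pow2_ge_0. }
  pose proof (Rle_abs (snd q)).
  assert (HB2: sqrt M + 1 < bnd a x - snd q) by (unfold B in Hb; lra).
  rewrite (mx0_pos (bnd a x - snd q)) by lra.
  clearbody c xm M B e r.
  assert (HMq: M < (bnd a x - snd q)^2).
  { set (y := bnd a x - snd q) in *. set (s := sqrt M) in *. clearbody y s.
    rewrite <- HMs. nra. }
  unfold Gf in HM. pose proof (pow2_ge_0 (fst q - x)). lra.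
Qed.


Lemma proj_exists a q : 0 < a -> exists p0, Defs.Delta a p0 /\ (forall y, Defs.Delta a y -> eucl q p0 <= eucl q y).
Proof.
  intros ha. destruct (Gf_min a q ha) as [x0 [Hx0 Hmin]].
  exists (x0, snd q + mx0 (bnd a x0 - snd q)). split.
  - unfold Defs.Delta; simpl. split. apply th_range; auto. pose proof (mx0_ge (bnd a x0 - snd q)). lra.
  - intros [x z] [Hx Hz]. simpl in *. unfold eucl; simpl.
    apply sqrt_le_1_alt.
    assert (Hxx: - (PI/2) < th a x < PI/2) by (apply th_range; auto).
    pose proof (Hmin x Hxx) as Hm. unfold Gf in Hm; simpl in Hm.
    assert (mx0 (bnd a x - snd q) ^ 2 <= (snd q - z)^2).
    { destruct (Rle_dec (bnd a x - snd q) 0) as [Hn|Hn].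
      - rewrite mx0_neg by auto. replace (0^2) with 0 by ring. apply pow2_ge_0.
      - rewrite mx0_pos by lra. replace ((snd q - z)^2) with ((z - snd q)^2) by ring.
        apply pow_incr; lra. }
    replace ((snd q - (snd q + mx0 (bnd a x0 - snd q))) ^ 2) with (mx0 (bnd a x0 - snd q) ^ 2) by ring.
    lra.
Qed.

Lemma dist_eq a q p0 : Defs.Delta a p0 -> (forall y, Defs.Delta a y -> eucl q p0 <= eucl q y) ->
  dist_Delta a q = eucl q p0.
Proof.
  intros H1 H2. unfold dist_Delta. apply glb_min.
  - exists p0; auto.
  - intros r [y [Hy ->]]. auto.
Qed.

Lemma eucl_ge0 p q : 0 <= eucl p q.
Proof. apply sqrt_pos. Qed.

Lemma dist_ge0 a q : 0 < a -> 0 <= dist_Delta a q.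
Proof.
  intros ha. destruct (proj_exists a q ha) as [p0 [H1 H2]]. rewrite (dist_eq a q p0); auto. apply eucl_ge0.
Qed.

Lemma dist_le a q y : 0 < a -> Defs.Delta a y -> dist_Delta a q <= eucl q y.
Proof.
  intros ha Hy. destruct (proj_exists a q ha) as [p0 [H1 H2]]. rewrite (dist_eq a q p0); auto.
Qed.

Lemma dist_Delta0 a q : 0 < a -> Defs.Delta a q -> dist_Delta a q = 0.
Proof.
  intros ha Hq. apply Rle_antisym. 
  - apply Rle_trans with (eucl q q). apply dist_le; auto. unfold eucl. 
    replace ((fst q - fst q) ^ 2 + (snd q - snd q) ^ 2) with 0 by ring. rewrite sqrt_0; lra.
  - apply dist_ge0; auto.
Qed.

Lemma Delta_convex a p q s : 0 < a -> Defs.Delta a p -> Defs.Delta a q -> 0 <= s <= 1 ->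
  Defs.Delta a (s * fst p + (1-s) * fst q, s * snd p + (1-s) * snd q).
Proof.
  intros ha [Hp1 Hp2] [Hq1 Hq2] Hs. unfold Defs.Delta; simpl. split.
  - set (L := - 2 / a + 1 - 3 * a) in *. set (U := 1 - 3 * a) in *. clearbody L U.
    destruct (Req_dec s 0) as [->|Hs0]. split; lra.
    assert (0 < s) by lra.
    assert (0 < s * (fst p - L)) by (apply Rmult_lt_0_compat; lra).
    assert (0 < s * (U - fst p)) by (apply Rmult_lt_0_compat; lra).
    assert (0 <= (1-s) * (fst q - L)) by (apply Rmult_le_pos; lra).
    assert (0 <= (1-s) * (U - fst q)) by (apply Rmult_le_pos; lra).
    split; nra.
  - pose proof (bnd_convex a ha (fst p) (fst q) s) as Hc.
    assert (bnd a (s * fst p + (1 - s) * fst q) <= s * bnd a (fst p) + (1 - s) * bnd a (fst q)).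
    { apply Hc; auto; apply th_range; auto. }
    nra.
Qed.

Lemma sqrt_le_of_sq X Y : 0 <= Y -> X <= Y^2 -> sqrt X <= Y.
Proof.
  intros HY HX. rewrite <- (sqrt_pow2 Y HY). apply sqrt_le_1_alt. lra.
Qed.

Lemma cauchy2 u1 v1 u2 v2 : u1*u2+v1*v2 <= sqrt (u1^2+v1^2) * sqrt (u2^2+v2^2).
Proof.
  rewrite <- sqrt_mult by nra.
  destruct (Rle_dec (u1*u2+v1*v2) 0). 
  - pose proof (sqrt_pos ((u1 ^ 2 + v1 ^ 2) * (u2 ^ 2 + v2 ^ 2))). lra.
  - rewrite <- (sqrt_pow2 (u1*u2+v1*v2)) by lra. apply sqrt_le_1_alt.
    assert (0 <= (u1*v2 - u2*v1)^2) by apply pow2_ge_0. nra.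
Qed.

Lemma minkowski u1 v1 u2 v2 :
  sqrt ((u1+u2)^2 + (v1+v2)^2) <= sqrt (u1^2+v1^2) + sqrt (u2^2+v2^2).
Proof.
  apply sqrt_le_of_sq. pose proof (sqrt_pos (u1^2+v1^2)); pose proof (sqrt_pos (u2^2+v2^2)); lra.
  pose proof (cauchy2 u1 v1 u2 v2).
  assert (E1: sqrt (u1^2+v1^2) ^2 = u1^2+v1^2) by (apply pow2_sqrt; nra).
  assert (E2: sqrt (u2^2+v2^2) ^2 = u2^2+v2^2) by (apply pow2_sqrt; nra).
  nra.
Qed.

Lemma sqrt_scale s u v : 0 <= s -> sqrt ((s*u)^2 + (s*v)^2) = s * sqrt (u^2+v^2).
Proof.
  intros Hs. replace ((s*u)^2 + (s*v)^2) with (s^2 * (u^2+v^2)) by ring.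
  rewrite sqrt_mult by nra. rewrite sqrt_pow2; auto.
Qed.

Lemma eucl_tri p q r : eucl p r <= eucl p q + eucl q r.
Proof.
  unfold eucl. 
  replace ((fst p - fst r)^2 + (snd p - snd r)^2) with
    (((fst p - fst q) + (fst q - fst r))^2 + ((snd p - snd q) + (snd q - snd r))^2) by ring.
  apply minkowski.
Qed.

Lemma eucl_sym p q : eucl p q = eucl q p.
Proof. unfold eucl. f_equal. ring. Qed.

Lemma dist_lip a q q' : 0 < a -> dist_Delta a q <= dist_Delta a q' + eucl q q'.
Proof.
  intros ha. destruct (proj_exists a q' ha) as [p' [H1 H2]].
  rewrite (dist_eq a q' p' H1 H2).
  apply Rle_trans with (eucl q p'). apply dist_le; auto.
  pose proof (eucl_tri q q' p'). lra.
Qed.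

Lemma dist_convex a q1 q2 s : 0 < a -> 0 <= s <= 1 ->
  dist_Delta a (s * fst q1 + (1-s) * fst q2, s * snd q1 + (1-s) * snd q2)
  <= s * dist_Delta a q1 + (1-s) * dist_Delta a q2.
Proof.
  intros ha Hs.
  destruct (proj_exists a q1 ha) as [p1 [H1 H1']].
  destruct (proj_exists a q2 ha) as [p2 [H2 H2']].
  rewrite (dist_eq a q1 p1 H1 H1'), (dist_eq a q2 p2 H2 H2').
  eapply Rle_trans. apply dist_le; auto. apply (Delta_convex a p1 p2 s ha H1 H2 Hs).
  unfold eucl; cbn [fst snd].
  rewrite <- (sqrt_scale s) by lra. rewrite <- (sqrt_scale (1-s)) by lra.
  eapply Rle_trans; [|apply minkowski]. right. f_equal. ring.
Qed.

Lemma dom_le a p : 0 < a -> dom_phi a p -> dist_Delta a p <= 2 * a.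
Proof.
  intros ha Hp. destruct (Rle_dec (dist_Delta a p) (2*a)) as [H|H]; auto.
  exfalso. destruct (Hp (dist_Delta a p - 2*a)) as [q [[Hq1 Hq2] Hq3]]. lra.
  pose proof (dist_lip a p q ha). lra.
Qed.

Lemma semicircle_conc a d1 d2 t : 0 < a -> 0 <= d1 <= 2*a -> 0 <= d2 <= 2*a -> 0 <= t <= 1 ->
  t * sqrt (4*a^2 - d1^2) + (1-t) * sqrt (4*a^2 - d2^2) <= sqrt (4*a^2 - (t*d1+(1-t)*d2)^2).
Proof.
  intros ha H1 H2 Ht.
  set (A := sqrt (4*a^2 - d1^2)). set (B := sqrt (4*a^2 - d2^2)).
  assert (HA: A^2 = 4*a^2 - d1^2) by (apply pow2_sqrt; nra).
  assert (HB: B^2 = 4*a^2 - d2^2) by (apply pow2_sqrt; nra).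
  assert (A0: 0 <= A) by apply sqrt_pos. assert (B0: 0 <= B) by apply sqrt_pos.
  clearbody A B.
  assert (HX: (A*B + d1*d2)^2 <= (4*a^2)^2).
  { assert (0 <= (A*d2 - B*d1)^2) by apply pow2_ge_0.
    replace ((4*a^2)^2) with ((A^2+d1^2)*(B^2+d2^2)) by (rewrite HA, HB; ring). nra. }
  assert (HX2: A*B + d1*d2 <= 4*a^2).
  { assert (0 <= A*B + d1*d2) by (apply Rplus_le_le_0_compat; apply Rmult_le_pos; lra).
    destruct (Rle_dec (A*B + d1*d2) (4*a^2)) as [h|h]; auto. exfalso.
    assert (h2: 4*a^2 < A*B + d1*d2) by lra.
    assert (0 < a^2) by nra.
    assert ((4*a^2)*(4*a^2) < (A*B + d1*d2)*(A*B + d1*d2)) by (apply Rmult_le_0_lt_compat; lra).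
    nra. }
  assert (tA: 0 <= t*A + (1-t)*B) by (apply Rplus_le_le_0_compat; apply Rmult_le_pos; lra).
  rewrite <- (sqrt_pow2 (t*A + (1-t)*B)) by lra.
  apply sqrt_le_1_alt.
  assert (E0: (t*A + (1-t)*B)^2 + (t*d1+(1-t)*d2)^2 = t^2*(A^2+d1^2) + (1-t)^2*(B^2+d2^2) + 2*(t*(1-t))*(A*B+d1*d2)) by ring.
  rewrite HA, HB in E0.
  assert (K: 0 <= 2*(t*(1-t))*(4*a^2 - (A*B+d1*d2))).
  { apply Rmult_le_pos. assert (0 <= t*(1-t)) by (apply Rmult_le_pos; lra). lra. lra. }
  ring_simplify in E0. ring_simplify in K. lra.
Qed.

Lemma part1 a : 0 < a -> convex_on (dom_phi a) (phi a).
Proof.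
  intros ha p q Hp Hq _ t Ht.
  set (m := (t * fst p + (1 - t) * fst q, t * snd p + (1 - t) * snd q)).
  pose proof (dom_le a p ha Hp). pose proof (dom_le a q ha Hq).
  pose proof (dist_ge0 a p ha). pose proof (dist_ge0 a q ha). pose proof (dist_ge0 a m ha).
  pose proof (dist_convex a p q t ha Ht) as Hc. fold m in Hc.
  unfold phi.
  pose proof (semicircle_conc a (dist_Delta a p) (dist_Delta a q) t ha ltac:(lra) ltac:(lra) Ht).
  assert (sqrt (4 * a ^ 2 - (t * dist_Delta a p + (1 - t) * dist_Delta a q) ^ 2) <= sqrt (4 * a ^ 2 - dist_Delta a m ^ 2)).
  { apply sqrt_le_1_alt. assert (dist_Delta a m ^2 <= (t * dist_Delta a p + (1 - t) * dist_Delta a q) ^ 2).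
    apply pow_incr; lra. lra. }
  lra.
Qed.

Definition nearest a q p0 := Defs.Delta a p0 /\ forall y, Defs.Delta a y -> eucl q p0 <= eucl q y.

Lemma eucl_sq p q : eucl p q ^ 2 = (fst p - fst q)^2 + (snd p - snd q)^2.
Proof. unfold eucl. apply pow2_sqrt. apply Rplus_le_le_0_compat; apply pow2_ge_0. Qed.

Lemma eucl_le_sq p q r : eucl p q <= eucl p r ->
  (fst p - fst q)^2 + (snd p - snd q)^2 <= (fst p - fst r)^2 + (snd p - snd r)^2.
Proof.
  intros H. rewrite <- !eucl_sq. apply pow_incr. split; auto. apply eucl_ge0.
Qed.

Lemma sq0 x : x^2 = 0 -> x = 0.
Proof. intros H. destruct (Req_dec x 0); auto. exfalso. apply (pow_nonzero x 2); auto. Qed.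

Lemma VI a q p0 y : 0 < a -> nearest a q p0 -> Defs.Delta a y ->
  (fst q - fst p0) * (fst y - fst p0) + (snd q - snd p0) * (snd y - snd p0) <= 0.
Proof.
  intros ha [Hp0 Hmin] Hy.
  set (W := (fst q - fst p0) * (fst y - fst p0) + (snd q - snd p0) * (snd y - snd p0)).
  set (V := (fst y - fst p0)^2 + (snd y - snd p0)^2).
  destruct (Rle_dec W 0) as [h|h]; auto. exfalso.
  assert (Key: forall s, 0 < s <= 1 -> 2 * W <= s * V).
  { intros s Hs.
    pose proof (Hmin _ (Delta_convex a y p0 s ha Hy Hp0 ltac:(lra))) as Hm.
    apply eucl_le_sq in Hm. cbn [fst snd] in Hm. unfold W, V.
    destruct q as [qx qz], p0 as [px pz], y as [yx yz]; cbn [fst snd] in *.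
    assert (E: (qx - (s * yx + (1 - s) * px)) ^ 2 + (qz - (s * yz + (1 - s) * pz)) ^ 2
      = (qx - px) ^ 2 + (qz - pz) ^ 2 - 2*s*((qx - px) * (yx - px) + (qz - pz) * (yz - pz))
        + s*(s*((yx - px) ^ 2 + (yz - pz) ^ 2))) by ring.
    rewrite E in Hm. clear E.
    set (W' := (qx - px) * (yx - px) + (qz - pz) * (yz - pz)) in *.
    set (V' := (yx - px) ^ 2 + (yz - pz) ^ 2) in *. clearbody W' V'.
    assert (s * (2*W') <= s * (s*V')) by lra.
    apply Rmult_le_reg_l in H; lra. }
  assert (HV: 0 < V).
  { destruct (Rle_dec V 0) as [hv|hv]; [|lra]. exfalso.
    unfold V in hv. pose proof (pow2_ge_0 (fst y - fst p0)). pose proof (pow2_ge_0 (snd y - snd p0)).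
    assert (E1: fst y - fst p0 = 0) by (apply sq0; lra).
    assert (E2: snd y - snd p0 = 0) by (apply sq0; lra).
    unfold W in h. rewrite E1, E2 in h. lra. }
  set (s := Rmin 1 (W / V)).
  assert (Hs: 0 < s <= 1).
  { unfold s. split. apply Rmin_glb_lt. lra. apply Rdiv_lt_0_compat; lra. apply Rmin_l. }
  pose proof (Key s Hs).
  assert (s * V <= W).
  { apply Rle_trans with ((W/V)*V). apply Rmult_le_compat_r. lra. apply Rmin_r. right; field; lra. }
  lra.
Qed.

Lemma cont_eps f x : continuity_pt f x -> forall eps, 0 < eps ->
  exists del, 0 < del /\ forall y, Rabs (y - x) < del -> Rabs (f y - f x) < eps.
Proof.
  intros Hc eps He. apply continuity_pt_locally with (eps := mkposreal eps He) in Hc.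
  destruct Hc as [del Hd]. exists del. split. apply cond_pos.
  intros y Hy. apply Hd. exact Hy.
Qed.

Lemma deriv_affine f x l A B c : derivable_pt_lim f x l ->
  derivable_pt_lim (fun y => A*(y-x) + B*(f y - c)) x (A + B*l).
Proof.
  intros H eps He.
  assert (He': 0 < eps/(Rabs B + 1)) by (apply Rdiv_lt_0_compat; [lra | pose proof (Rabs_pos B); lra]).
  destruct (H _ He') as [del Hd]. exists del. intros h hne hh.
  replace ((A * (x + h - x) + B * (f (x + h) - c) - (A * (x - x) + B * (f x - c))) / h - (A + B * l))
    with (B * ((f (x + h) - f x) / h - l)) by (field; auto).
  rewrite Rabs_mult. pose proof (Hd h hne hh). pose proof (Rabs_pos B).
  apply Rle_lt_trans with (Rabs B * (eps / (Rabs B + 1))).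
  apply Rmult_le_compat_l; lra.
  apply Rlt_le_trans with ((Rabs B + 1) * (eps / (Rabs B + 1))).
  apply Rmult_lt_compat_r; lra. right; field; lra.
Qed.

Lemma locmax_deriv0 f x l r : derivable_pt_lim f x l -> 0 < r ->
  (forall h, Rabs h < r -> f (x+h) <= f x) -> l = 0.
Proof.
  intros Hd Hr Hm.
  destruct (Rtotal_order l 0) as [Hl|[Hl|Hl]]; auto; exfalso.
  - destruct (Hd (-l) ltac:(lra)) as [del Hdel].
    set (h := - Rmin (del/2) (r/2)).
    assert (h0: 0 < - h) by (unfold h; apply Ropp_0_gt_lt_contravar, Ropp_lt_gt_0_contravar; apply Rmin_glb_lt; pose proof (cond_pos del); lra).
    assert (hh: Rabs h < del /\ Rabs h < r).
    { rewrite Rabs_left by lra. unfold h. rewrite Ropp_involutive. 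
      pose proof (cond_pos del). split.
      apply Rle_lt_trans with (del/2). apply Rmin_l. lra.
      apply Rle_lt_trans with (r/2). apply Rmin_r. lra. }
    pose proof (Hdel h ltac:(lra) (proj1 hh)) as Q.
    pose proof (Hm h (proj2 hh)) as M.
    assert (0 <= (f (x+h) - f x) / h).
    { unfold Rdiv. replace ((f (x + h) - f x) * / h) with ((f x - f (x+h)) * / (-h)) by (field; lra).
      apply Rmult_le_pos. lra. left; apply Rinv_0_lt_compat; lra. }
    apply abs_lt in Q. lra.
  - destruct (Hd l ltac:(lra)) as [del Hdel].
    set (h := Rmin (del/2) (r/2)).
    assert (h0: 0 < h) by (unfold h; apply Rmin_glb_lt; pose proof (cond_pos del); lra).
    assert (hh: Rabs h < del /\ Rabs h < r).
    { rewrite Rabs_right by lra. unfold h.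
      pose proof (cond_pos del). split.
      apply Rle_lt_trans with (del/2). apply Rmin_l. lra.
      apply Rle_lt_trans with (r/2). apply Rmin_r. lra. }
    pose proof (Hdel h ltac:(lra) (proj1 hh)) as Q.
    pose proof (Hm h (proj2 hh)) as M.
    assert ((f (x+h) - f x) / h <= 0).
    { unfold Rdiv. replace ((f (x + h) - f x) * / h) with (- ((f x - f (x+h)) * / h)) by (field; lra).
      assert (0 <= (f x - f (x+h)) * / h). apply Rmult_le_pos. lra. left; apply Rinv_0_lt_compat; lra. lra. }
    apply abs_lt in Q. lra.
Qed.

Lemma in_int_margin a x : 0 < a -> - 2 / a + 1 - 3 * a < x < 1 - 3 * a ->
  exists m, 0 < m /\ forall h, Rabs h < m -> - 2 / a + 1 - 3 * a < x + h < 1 - 3 * a.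
Proof.
  intros ha [H1 H2]. exists (Rmin (x - (- 2 / a + 1 - 3 * a)) (1 - 3 * a - x)). split.
  apply Rmin_glb_lt; lra.
  intros h Hh. pose proof (Rmin_l (x - (- 2 / a + 1 - 3 * a)) (1 - 3 * a - x)).
  pose proof (Rmin_r (x - (- 2 / a + 1 - 3 * a)) (1 - 3 * a - x)). apply abs_lt in Hh. lra.
Qed.

Lemma normal_struct a q p0 : 0 < a -> nearest a q p0 -> ~ Defs.Delta a q ->
  snd p0 = bnd a (fst p0) /\ 0 < eucl q p0 /\
  fst q - fst p0 = eucl q p0 * sin (th a (fst p0)) /\
  snd q - snd p0 = - eucl q p0 * cos (th a (fst p0)).
Proof.
  intros ha Hn Hq. pose proof Hn as [Hp0 Hmin].
  destruct p0 as [x0 z0]. destruct q as [qx qz]. cbn [fst snd] in *.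
  destruct Hp0 as [Hx0 Hz0]. cbn [fst snd] in *.
  destruct (in_int_margin a x0 ha Hx0) as [m [Hm Hmh]].
  assert (Hup: qz - z0 <= 0).
  { pose proof (VI a (qx,qz) (x0,z0) (x0, z0+1) ha Hn) as V. cbn [fst snd] in V.
    assert (Defs.Delta a (x0, z0+1)) by (split; cbn [fst snd]; lra). specialize (V H). lra. }
  assert (Hz: z0 = bnd a x0).
  { destruct (Rle_dec z0 (bnd a x0)) as [h|h]; [lra|]. exfalso.
    assert (Hdown: qz - z0 >= 0).
    { pose proof (VI a (qx,qz) (x0,z0) (x0, bnd a x0) ha Hn) as V. cbn [fst snd] in V.
      assert (Defs.Delta a (x0, bnd a x0)) by (split; cbn [fst snd]; lra). specialize (V H).
      assert (0 < z0 - bnd a x0) by lra.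
      assert ((qz - z0) * (bnd a x0 - z0) <= 0) by lra.
      destruct (Rle_dec (qz - z0) 0) as [h2|h2]; [|lra].
      destruct (Req_dec (qz - z0) 0); [lra|]. exfalso. nra. }
    assert (Ex: qz = z0) by lra.
    assert (Hthx: - (PI/2) < th a x0 < PI/2) by (apply th_range; auto).
    destruct (cont_eps _ _ (bnd_cont a x0 ha Hthx) (z0 - bnd a x0) ltac:(lra)) as [d1 [Hd1 Hc]].
    set (hh := Rmin d1 m / 2).
    assert (Hh: 0 < hh /\ hh < d1 /\ hh < m).
    { unfold hh. pose proof (Rmin_l d1 m). pose proof (Rmin_r d1 m).
      assert (0 < Rmin d1 m) by (apply Rmin_glb_lt; lra). lra. }
    assert (Hy: forall e, Rabs e <= hh -> Defs.Delta a (x0 + e, z0)).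
    { intros e He. split; cbn [fst snd].
      apply Hmh. lra.
      assert (Rabs (x0 + e - x0) < d1) by (replace (x0 + e - x0) with e by ring; lra).
      specialize (Hc _ H). apply abs_lt in Hc. lra. }
    pose proof (VI a (qx,qz) (x0,z0) (x0 + hh, z0) ha Hn (Hy hh ltac:(rewrite Rabs_right; lra))) as V1.
    pose proof (VI a (qx,qz) (x0,z0) (x0 - hh, z0) ha Hn (Hy (-hh) ltac:(rewrite Rabs_Ropp, Rabs_right; lra))) as V2.
    cbn [fst snd] in V1, V2.
    assert (qx = x0).
    { assert ((qx - x0) * hh <= 0) by (replace (x0 + hh - x0) with hh in V1 by ring; lra).
      assert ((qx - x0) * hh >= 0) by (replace (x0 - hh - x0) with (-hh) in V2 by ring; lra).
      destruct (Req_dec (qx - x0) 0); [lra|]. exfalso.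
      assert (Hzz: (qx - x0) * hh = 0) by lra. apply Rmult_integral in Hzz. lra. }
    apply Hq. subst. split; cbn [fst snd]; auto. }
  set (th0 := th a x0).
  assert (Hthx: - (PI/2) < th0 < PI/2) by (apply th_range; auto).
  assert (Hk: (qx - x0) + (qz - z0) * tan th0 = 0).
  { apply (locmax_deriv0 (fun y => (qx - x0)*(y-x0) + (qz - z0)*(bnd a y - z0)) x0 _ m).
    apply deriv_affine. apply bnd_deriv; auto. auto.
    intros e He.
    pose proof (VI a (qx,qz) (x0,z0) (x0 + e, bnd a (x0 + e)) ha Hn) as V.
    cbn [fst snd] in V.
    assert (Defs.Delta a (x0 + e, bnd a (x0 + e))) by (split; cbn [fst snd]; [apply Hmh; auto| lra]).
    specialize (V H). replace (x0 - x0) with 0 by ring. rewrite <- Hz. 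
    replace (z0 - z0) with 0 by ring. lra. }
  assert (Hlt: qz - z0 < 0).
  { destruct (Req_dec (qz - z0) 0) as [h|h]; [|lra]. exfalso.
    rewrite h in Hk. assert (qx = x0) by lra. apply Hq. subst.
    assert (qz = bnd a x0) by lra. subst. split; cbn [fst snd]; auto; lra. }
  set (D := z0 - qz). set (C := cos th0). set (S := sin th0).
  assert (HC: 0 < C) by (unfold C; apply cos_gt_0; lra).
  assert (HSC: S^2 + C^2 = 1) by (unfold S, C; rewrite <- (sin2_cos2 th0); unfold Rsqr; ring).
  assert (Ht: tan th0 = S / C) by reflexivity.
  rewrite Ht in Hk.
  assert (Hqx: qx - x0 = D * S / C) by (unfold D; replace (qx - x0) with (-(qz - z0)*(S/C)) by lra; field; lra).
  assert (He: eucl (qx,qz) (x0,z0) = D / C).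
  { unfold eucl; cbn [fst snd]. rewrite Hqx.
    replace ((D * S / C) ^ 2 + (qz - z0) ^ 2) with ((D/C)^2).
    apply sqrt_pow2. unfold D; apply Rlt_le, Rdiv_lt_0_compat; lra.
    replace (qz - z0) with (-D) by (unfold D; ring).
    replace ((D * S / C) ^ 2 + (-D)^2) with (D^2 * (S^2 + C^2) / C^2) by (field; lra).
    rewrite HSC. field; lra. }
  rewrite He. split; auto. split. apply Rdiv_lt_0_compat; unfold D; lra.
  fold th0 C S. split.
  - rewrite Hqx. field; lra.
  - unfold D. field; lra.
Qed.

Lemma proj_lip a q1 p1 q2 p2 : 0 < a -> nearest a q1 p1 -> nearest a q2 p2 ->
  (fst p1 - fst p2)^2 + (snd p1 - snd p2)^2 <= (fst q1 - fst q2)^2 + (snd q1 - snd q2)^2.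
Proof.
  intros ha H1 H2.
  pose proof (VI a q1 p1 p2 ha H1 (proj1 H2)) as V1.
  pose proof (VI a q2 p2 p1 ha H2 (proj1 H1)) as V2.
  destruct q1 as [a1 b1], q2 as [a2 b2], p1 as [c1 d1], p2 as [c2 d2]; cbn [fst snd] in *.
  assert (HPQ: (c1-c2)^2 + (d1-d2)^2 <= (a1-a2)*(c1-c2) + (b1-b2)*(d1-d2)) by nra.
  set (Px := c1 - c2) in *. set (Pz := d1 - d2) in *.
  set (Qx := a1 - a2) in *. set (Qz := b1 - b2) in *.
  assert (CS: (Qx*Px + Qz*Pz)^2 <= (Qx^2+Qz^2)*(Px^2+Pz^2)).
  { assert (0 <= (Qx*Pz - Qz*Px)^2) by apply pow2_ge_0.
    replace ((Qx^2+Qz^2)*(Px^2+Pz^2)) with ((Qx*Px + Qz*Pz)^2 + (Qx*Pz - Qz*Px)^2) by ring. clearbody Px Pz Qx Qz. lra. }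
  clearbody Px Pz Qx Qz.
  set (N := Px^2 + Pz^2) in *. set (M := Qx^2 + Qz^2) in *. set (X := Qx*Px + Qz*Pz) in *.
  assert (HN: 0 <= N) by (unfold N; apply Rplus_le_le_0_compat; apply pow2_ge_0).
  assert (HM: 0 <= M) by (unfold M; apply Rplus_le_le_0_compat; apply pow2_ge_0).
  clearbody N M X.
  destruct (Req_dec N 0) as [h|h]. 
  - rewrite h. lra.
  - assert (N*N <= X^2).
    { replace (X^2) with (X*X) by ring. apply Rle_trans with (N*X). apply Rmult_le_compat_l; lra. apply Rmult_le_compat_r; lra. }
    assert (N * N <= M * N) by lra.
    apply Rmult_le_reg_r with N. lra. lra.
Qed.

Lemma nearest_ray a q p0 q' l : 0 < a -> nearest a q p0 -> 0 <= l ->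
  fst q' - fst p0 = l * (fst q - fst p0) -> snd q' - snd p0 = l * (snd q - snd p0) ->
  nearest a q' p0.
Proof.
  intros ha Hn Hl E1 E2. split. apply Hn.
  intros y Hy. pose proof (VI a q p0 y ha Hn Hy) as V.
  unfold eucl. apply sqrt_le_1_alt.
  replace (fst q' - fst y) with ((fst q' - fst p0) - (fst y - fst p0)) by ring.
  replace (snd q' - snd y) with ((snd q' - snd p0) - (snd y - snd p0)) by ring.
  rewrite E1, E2.
  set (u := fst q - fst p0) in *. set (v := snd q - snd p0) in *.
  set (s := fst y - fst p0) in *. set (t := snd y - snd p0) in *. clearbody u v s t.
  assert (l * (u*s + v*t) <= 0).
  { replace 0 with (l*0) by ring. apply Rmult_le_compat_l; auto. }
  assert (0 <= s^2 + t^2) by (apply Rplus_le_le_0_compat; apply pow2_ge_0).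
  replace ((l*u - s)^2 + (l*v - t)^2) with ((l*u)^2 + (l*v)^2 - 2*(l*(u*s+v*t)) + (s^2+t^2)) by ring.
  lra.
Qed.

Lemma nearest_ex a q : 0 < a -> exists p0, nearest a q p0.
Proof. intros ha. destruct (proj_exists a q ha) as [p0 H]. exists p0. exact H. Qed.

Lemma nearest_dist a q p0 : nearest a q p0 -> dist_Delta a q = eucl q p0.
Proof. intros [H1 H2]. apply dist_eq; auto. Qed.

Lemma psi_deriv a qx qz px pz w1 w2 : 0 < 4*a^2 - ((qx-px)^2 + (qz-pz)^2) ->
  derivable_pt_lim (fun t => -1 + 2*a - sqrt (4*a^2 - ((qx + t*w1 - px)^2 + (qz + t*w2 - pz)^2))) 0
    (((qx-px)*w1 + (qz-pz)*w2) / sqrt (4*a^2 - ((qx-px)^2 + (qz-pz)^2))).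
Proof.
  intros H. apply is_derive_Reals. auto_derive.
  - replace (qx + 0*w1 - px) with (qx - px) by ring. replace (qz + 0*w2 - pz) with (qz - pz) by ring. lra.
  - replace (qx + 0*w1 - px) with (qx - px) by ring. replace (qz + 0*w2 - pz) with (qz - pz) by ring.
    assert (0 < sqrt (4*a^2 - ((qx-px)^2 + (qz-pz)^2))) by (apply sqrt_lt_R0; lra).
    set (S := sqrt (4*a^2 - ((qx-px)^2 + (qz-pz)^2))) in *.
    match goal with |- context [sqrt ?X] => replace X with (4*a^2 - ((qx-px)^2 + (qz-pz)^2)) by ring end.
    fold S. field. lra.
Qed.

Lemma phi_le_psi a y p0 : 0 < a -> Defs.Delta a p0 ->
  phi a y <= -1 + 2*a - sqrt (4*a^2 - ((fst y - fst p0)^2 + (snd y - snd p0)^2)).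
Proof.
  intros ha Hp. unfold phi.
  pose proof (dist_le a y p0 ha Hp). pose proof (dist_ge0 a y ha).
  rewrite <- eucl_sq.
  assert (dist_Delta a y ^ 2 <= eucl y p0 ^ 2) by (apply pow_incr; lra).
  assert (sqrt (4 * a ^ 2 - eucl y p0 ^ 2) <= sqrt (4 * a ^ 2 - dist_Delta a y ^ 2)) by (apply sqrt_le_1_alt; lra).
  lra.
Qed.

Lemma line0 q w : line q w 0 = q.
Proof. unfold line. destruct q; cbn [fst snd]; f_equal; ring. Qed.

Lemma grad_dir a q p0 A B w1 w2 : 0 < a -> nearest a q p0 -> eucl q p0 < 2*a ->
  filterdiff (phi a) (locally q) (fun v => A * fst v + B * snd v) ->
  A * w1 + B * w2 = ((fst q - fst p0)*w1 + (snd q - snd p0)*w2) / sqrt (4*a^2 - eucl q p0 ^2).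
Proof.
  intros ha Hn He Hf.
  pose proof (fd_line_R _ q (w1,w2) A B Hf) as Df. cbn [fst snd] in Df.
  assert (He2: 0 < 4*a^2 - ((fst q - fst p0)^2 + (snd q - snd p0)^2)).
  { rewrite <- eucl_sq. pose proof (eucl_ge0 q p0). nra. }
  pose proof (psi_deriv a (fst q) (snd q) (fst p0) (snd p0) w1 w2 He2) as Dp.
  rewrite eucl_sq.
  assert (Dk := derivable_pt_lim_minus _ _ _ _ _ Df Dp).
  apply Rminus_diag_uniq.
  apply (locmax_deriv0 _ 0 _ 1 Dk). lra.
  intros h _. unfold minus_fct. rewrite Rplus_0_l.
  assert (E: phi a (line q (w1,w2) 0) = -1 + 2 * a - sqrt (4 * a ^ 2 - ((fst q + 0 * w1 - fst p0) ^ 2 + (snd q + 0 * w2 - snd p0) ^ 2))).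
  { rewrite line0. unfold phi. rewrite (nearest_dist a q p0 Hn). rewrite eucl_sq. repeat f_equal; ring. }
  rewrite E.
  pose proof (phi_le_psi a (line q (w1,w2) h) p0 ha (proj1 Hn)). unfold line in *; cbn [fst snd] in *. lra.
Qed.

Lemma grad_id a q p0 A B : 0 < a -> nearest a q p0 -> eucl q p0 < 2*a ->
  filterdiff (phi a) (locally q) (fun v => A * fst v + B * snd v) ->
  A = (fst q - fst p0) / sqrt (4*a^2 - eucl q p0 ^2) /\
  B = (snd q - snd p0) / sqrt (4*a^2 - eucl q p0 ^2).
Proof.
  intros ha Hn He Hf. split.
  - pose proof (grad_dir a q p0 A B 1 0 ha Hn He Hf). rewrite <- (Rmult_1_r A).
    replace (A*1) with (A*1 + B*0) by ring. rewrite H. f_equal. ring.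
  - pose proof (grad_dir a q p0 A B 0 1 ha Hn He Hf). rewrite <- (Rmult_1_r B).
    replace (B*1) with (A*0 + B*1) by ring. rewrite H. f_equal. ring.
Qed.

Lemma locally_line (P : R*R -> Prop) p w : locally p P ->
  exists r, 0 < r /\ forall t, Rabs t < r -> P (line p w t).
Proof.
  intros [eps He].
  set (M := Rabs (fst w) + Rabs (snd w) + 1).
  assert (HM: 0 < M) by (unfold M; pose proof (Rabs_pos (fst w)); pose proof (Rabs_pos (snd w)); lra).
  exists (eps / M). split. apply Rdiv_lt_0_compat; [apply cond_pos|lra].
  intros t Ht. apply He. pose proof (cond_pos eps).
  assert (K: forall u, Rabs u <= M -> Rabs (t * u) < eps).
  { intros u Hu. rewrite Rabs_mult. 
    apply Rle_lt_trans with (Rabs t * M). apply Rmult_le_compat_l; auto. apply Rabs_pos.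
    apply Rlt_le_trans with (eps / M * M). apply Rmult_lt_compat_r; auto. right; field; lra. }
  split; unfold line; cbn [fst snd]; unfold ball; simpl; unfold AbsRing_ball, abs, minus, plus, opp; simpl.
  - match goal with |- Rabs ?X < _ => replace X with (t * fst w) by ring end. apply K.
    unfold M; pose proof (Rabs_pos (snd w)); lra.
  - match goal with |- Rabs ?X < _ => replace X with (t * snd w) by ring end. apply K.
    unfold M; pose proof (Rabs_pos (fst w)); lra.
Qed.

Lemma one_sided_zero f l r : derivable_pt_lim f 0 l -> 0 < r ->
  (forall t, 0 <= t < r -> f t = 0) -> l = 0.
Proof.
  intros Hd Hr Hz. destruct (Req_dec l 0) as [h|h]; auto. exfalso.
  assert (Hl: 0 < Rabs l) by (apply Rabs_pos_lt; auto).
  destruct (Hd (Rabs l) Hl) as [del Hdel].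
  set (t := Rmin (del/2) (r/2)).
  pose proof (cond_pos del).
  assert (Ht: 0 < t) by (unfold t; apply Rmin_glb_lt; lra).
  assert (Ht2: t < del /\ t < r).
  { unfold t; split; [apply Rle_lt_trans with (del/2); [apply Rmin_l|lra] | apply Rle_lt_trans with (r/2); [apply Rmin_r|lra]]. }
  assert (Rabs t < del) by (rewrite Rabs_right; lra).
  specialize (Hdel t ltac:(lra) H0).
  rewrite Rplus_0_l, (Hz t ltac:(lra)), (Hz 0 ltac:(lra)) in Hdel.
  replace ((0 - 0) / t - l) with (-l) in Hdel by (field; lra). rewrite Rabs_Ropp in Hdel. lra.
Qed.

Lemma upper_lim u F T r : derivable_pt_lim u 0 T -> u 0 = 0 -> 0 < r ->
  (forall e, 0 < e < r -> u e <= e * F e) -> continuity_pt F 0 -> T <= F 0.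
Proof.
  intros Hd Hu0 Hr Hb Hc.
  apply Rnot_lt_le. intros Hlt.
  set (eps := (T - F 0)/3).
  assert (He: 0 < eps) by (unfold eps; lra).
  destruct (Hd eps He) as [d1 Hd1].
  destruct (cont_eps F 0 Hc eps He) as [d2 [Hd2 Hc2]].
  pose proof (cond_pos d1).
  set (e := Rmin (Rmin (d1/2) (d2/2)) (r/2)).
  assert (He1: 0 < e) by (unfold e; repeat apply Rmin_glb_lt; lra).
  assert (He2: e <= d1/2 /\ e <= d2/2 /\ e <= r/2).
  { unfold e. pose proof (Rmin_l (Rmin (d1/2) (d2/2)) (r/2)). pose proof (Rmin_r (Rmin (d1/2) (d2/2)) (r/2)).
    pose proof (Rmin_l (d1/2) (d2/2)). pose proof (Rmin_r (d1/2) (d2/2)). lra. }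
  assert (Rabs e < d1) by (rewrite Rabs_right; lra).
  specialize (Hd1 e ltac:(lra) H0). rewrite Rplus_0_l, Hu0 in Hd1.
  assert (Rabs (e - 0) < d2) by (rewrite Rminus_0_r, Rabs_right; lra).
  specialize (Hc2 e H1). apply abs_lt in Hc2. apply abs_lt in Hd1.
  pose proof (Hb e ltac:(lra)).
  assert ((u e - 0)/e <= F e).
  { unfold Rdiv. rewrite Rminus_0_r. apply Rmult_le_reg_r with e; auto.
    replace (u e * / e * e) with (u e) by (field; lra). lra. }
  unfold eps in *. lra.
Qed.

Lemma deriv_ext0 f g l r : derivable_pt_lim f 0 l -> 0 < r -> (forall t, Rabs t < r -> f t = g t) ->
  derivable_pt_lim g 0 l.
Proof.
  intros Hd Hr He eps Heps. destruct (Hd eps Heps) as [d Hdd].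
  assert (Hm: 0 < Rmin d r) by (apply Rmin_glb_lt; [apply cond_pos|lra]).
  exists (mkposreal _ Hm). intros h hne hh. simpl in hh.
  rewrite <- !He. apply Hdd; auto. apply Rlt_le_trans with (Rmin d r); auto; apply Rmin_l.
  rewrite Rabs_R0; lra. rewrite Rplus_0_l. apply Rlt_le_trans with (Rmin d r); auto; apply Rmin_r.
Qed.

Lemma phi_ge a y : 0 < a -> -1 <= phi a y.
Proof.
  intros ha. unfold phi.
  assert (sqrt (4 * a ^ 2 - dist_Delta a y ^ 2) <= 2*a).
  { apply sqrt_le_of_sq. lra. pose proof (pow2_ge_0 (dist_Delta a y)). lra. }
  lra.
Qed.

Lemma phi_Delta a y : 0 < a -> Defs.Delta a y -> phi a y = -1.
Proof.
  intros ha Hy. unfold phi. rewrite (dist_Delta0 a y ha Hy).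
  replace (4 * a ^ 2 - 0 ^ 2) with ((2*a)^2) by ring. rewrite sqrt_pow2 by lra. ring.
Qed.

Lemma grad_zero a q A B : 0 < a -> Defs.Delta a q ->
  filterdiff (phi a) (locally q) (fun v => A * fst v + B * snd v) -> A = 0 /\ B = 0.
Proof.
  intros ha Hq Hf.
  assert (K: forall w1 w2, A * w1 + B * w2 = 0).
  { intros w1 w2. pose proof (fd_line_R _ q (w1,w2) A B Hf) as Df. cbn [fst snd] in Df.
    apply derivable_pt_lim_opp in Df.
    assert (- (A*w1+B*w2) = 0).
    { apply (locmax_deriv0 _ 0 _ 1 Df). lra. intros h _. unfold opp_fct. rewrite Rplus_0_l, line0.
      rewrite (phi_Delta a q ha Hq). pose proof (phi_ge a (line q (w1, w2) h) ha). lra. }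
    lra. }
  pose proof (K 1 0). pose proof (K 0 1). split; lra.
Qed.

Lemma sin_le_abs x : sin x <= Rabs x.
Proof.
  destruct (Rlt_le_dec 0 x) as [h|h].
  - rewrite Rabs_right by lra. left; apply sin_lt_x; auto.
  - destruct (Rle_dec (-PI) x) as [h2|h2].
    + assert (0 <= sin (-x)) by (apply sin_ge_0; lra). rewrite sin_neg in H.
      pose proof (Rabs_pos x). lra.
    + pose proof (SIN_bound x). pose proof PI2_1. rewrite Rabs_left by lra. lra.
Qed.

Lemma abs_sin_le x : Rabs (sin x) <= Rabs x.
Proof.
  unfold Rabs at 1. destruct Rcase_abs.
  - rewrite <- sin_neg. replace (Rabs x) with (Rabs (-x)) by apply Rabs_Ropp. apply sin_le_abs.
  - apply sin_le_abs.
Qed.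

Lemma cos_lip u v : cos u <= cos v + Rabs (u - v).
Proof.
  pose proof (form2 u v) as E.
  assert (Rabs (cos u - cos v) <= Rabs (u - v)).
  { rewrite E. rewrite !Rabs_mult. 
    pose proof (abs_sin_le ((u - v)/2)). pose proof (Rabs_pos (sin ((u - v)/2))).
    pose proof (Rabs_pos (sin ((u + v)/2))).
    assert (Rabs (sin ((u + v)/2)) <= 1) by (apply Rabs_le; apply SIN_bound).
    replace (Rabs (-2)) with 2 by (unfold Rabs; destruct Rcase_abs; lra).
    replace ((u-v)/2) with ((u-v)*/2) in * by reflexivity.
    rewrite Rabs_mult in H. rewrite (Rabs_right (/2)) in H by lra.
    assert (Rabs (sin ((u - v) * / 2)) * Rabs (sin ((u + v) / 2)) <= Rabs (sin ((u - v) * / 2))).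
    { rewrite <- (Rmult_1_r (Rabs (sin ((u - v) * / 2)))) at 2. apply Rmult_le_compat_l; auto. }
    lra. }
  apply abs_le in H. lra.
Qed.

Lemma Rpower_32 X : 0 < X -> Rpower X (3/2) = X * sqrt X.
Proof.
  intros H. replace (3/2) with (1 + /2) by field. rewrite Rpower_plus, Rpower_1, Rpower_sqrt; auto.
Qed.

Lemma th_between a x0 x1 c : 0 < a -> - (PI/2) < th a x0 < PI/2 -> - (PI/2) < th a x1 < PI/2 ->
  Rmin x0 x1 <= c <= Rmax x0 x1 -> - (PI/2) < th a c < PI/2.
Proof.
  intros ha H0 H1 Hc. apply th_range in H0; auto. apply th_range in H1; auto. apply th_range; auto.
  unfold Rmin, Rmax in Hc. destruct Rle_dec; lra.
Qed.

Lemma mvt_bnd a x0 x1 : 0 < a -> - (PI/2) < th a x0 < PI/2 -> - (PI/2) < th a x1 < PI/2 ->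
  exists xi, Rabs (xi - x0) <= Rabs (x1 - x0) /\ - (PI/2) < th a xi < PI/2 /\
    bnd a x1 - bnd a x0 = tan (th a xi) * (x1 - x0).
Proof.
  intros ha H0 H1.
  destruct (Rtotal_order x0 x1) as [h|[h|h]].
  - destruct (MVT_cor2 (bnd a) (fun x => tan (th a x)) x0 x1 h) as [c [E Hc]].
    { intros c Hc. apply bnd_deriv; auto. apply (th_between a x0 x1); auto.
      unfold Rmin, Rmax; destruct Rle_dec; lra. }
    exists c. split. rewrite !Rabs_right; lra. split; auto.
    apply (th_between a x0 x1); auto. unfold Rmin, Rmax; destruct Rle_dec; lra.
  - subst. exists x1. split. lra. split; auto. ring.
  - destruct (MVT_cor2 (bnd a) (fun x => tan (th a x)) x1 x0 h) as [c [E Hc]].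
    { intros c Hc. apply bnd_deriv; auto. apply (th_between a x0 x1); auto.
      unfold Rmin, Rmax; destruct Rle_dec; lra. }
    exists c. split. rewrite !Rabs_left; lra. split; auto.
    apply (th_between a x0 x1); auto. unfold Rmin, Rmax; destruct Rle_dec; lra.
    replace (bnd a x1 - bnd a x0) with (-(bnd a x0 - bnd a x1)) by ring. rewrite E. ring.
Qed.

Lemma ratio_mono a d1 d2 : 0 <= d1 <= d2 -> d2 < 2*a ->
  d1 / sqrt (4*a^2 - d1^2) <= d2 / sqrt (4*a^2 - d2^2).
Proof.
  intros H1 H2.
  assert (0 < 4*a^2 - d2^2).
  { replace (4*a^2 - d2^2) with ((2*a - d2)*(2*a+d2)) by ring. apply Rmult_lt_0_compat; lra. }
  assert (d1^2 <= d2^2) by (apply pow_incr; lra).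
  assert (Hs2: 0 < sqrt (4*a^2 - d2^2)) by (apply sqrt_lt_R0; lra).
  assert (Hs: sqrt (4*a^2 - d2^2) <= sqrt (4*a^2 - d1^2)) by (apply sqrt_le_1_alt; lra).
  unfold Rdiv. apply Rmult_le_compat; try lra.
  left; apply Rinv_0_lt_compat; lra.
  apply Rinv_le_contravar; lra.
Qed.

Lemma deriv_normal a d S : 0 < d < 2*a ->
  derivable_pt_lim (fun t => (d + t) * S / sqrt (4*a^2 - (d+t)^2)) 0
    (S * (4*a^2 / (sqrt (4*a^2 - d^2))^3)).
Proof.
  intros H. assert (H2: 0 < 4*a^2 - d^2).
  { replace (4*a^2 - d^2) with ((2*a - d)*(2*a+d)) by ring. apply Rmult_lt_0_compat; lra. }
  assert (Hs: 0 < sqrt (4*a^2 - d^2)) by (apply sqrt_lt_R0; lra).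
  assert (Hss: sqrt (4*a^2 - d^2) ^ 2 = 4*a^2 - d^2) by (apply pow2_sqrt; lra).
  apply is_derive_Reals. auto_derive.
  - replace (4 * (a * (a * 1)) + - ((d + 0) * ((d + 0) * 1))) with (4*a^2 - d^2) by ring.
    split; [lra | split; [lra|auto]].
  - replace (4 * (a * (a * 1)) + - ((d + 0) * ((d + 0) * 1))) with (4*a^2 - d^2) by ring.
    set (s := sqrt (4*a^2 - d^2)) in *. clearbody s.
    replace (4*a^2) with (s^2 + d^2) by lra. field. lra.
Qed.

Lemma F_cont a d C : 0 < d < 2*a ->
  continuity_pt (fun e => (d + e) / sqrt (4*a^2 - (d+e)^2) * (a*PI/2) * (C + a*PI/2*e)) 0.
Proof.
  intros H. assert (H2: 0 < 4*a^2 - d^2).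
  { replace (4*a^2 - d^2) with ((2*a - d)*(2*a+d)) by ring. apply Rmult_lt_0_compat; lra. }
  apply derivable_continuous_pt.
  match goal with |- derivable_pt ?f 0 => assert (Hex: ex_derive f 0);
    [| exists (Derive f 0); apply is_derive_Reals; apply Derive_correct; exact Hex] end.
  auto_derive. replace (4 * (a * (a * 1)) + - ((d + 0) * ((d + 0) * 1))) with (4*a^2 - d^2) by ring.
  assert (0 < sqrt (4*a^2 - d^2)) by (apply sqrt_lt_R0; lra). split; [lra | split; [lra|auto]].
Qed.

Lemma eucl0 p q : eucl p q = 0 -> p = q.
Proof.
  intros H. unfold eucl in H. apply sqrt_eq_0 in H; [|apply Rplus_le_le_0_compat; apply pow2_ge_0].
  pose proof (pow2_ge_0 (fst p - fst q)). pose proof (pow2_ge_0 (snd p - snd q)).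
  assert (E1: fst p - fst q = 0) by (apply sq0; lra).
  assert (E2: snd p - snd q = 0) by (apply sq0; lra).
  destruct p, q; cbn [fst snd] in *. f_equal; lra.
Qed.

Lemma case0 a p (gx gz : R*R -> R) hxx hxz hzx hzz : 0 < a -> dist_Delta a p = 0 ->
    locally p (fun q =>
      filterdiff (phi a) (locally q) (fun v => gx q * fst v + gz q * snd v)) ->
    filterdiff (fun q => (gx q, gz q)) (locally p)
      (fun v => (hxx * fst v + hxz * snd v, hzx * fst v + hzz * snd v)) ->
    (hxx * hzz - hxz * hzx) / Rpower (1 + gx p ^ 2 + gz p ^ 2) (3 / 2)
      <= - (PI / 4) * gz p.
Proof.
  intros ha Hd H1 H2.
  destruct (nearest_ex a p ha) as [p0 Hn].
  rewrite (nearest_dist a p p0 Hn) in Hd. apply eucl0 in Hd. subst p0.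
  assert (Hp: Defs.Delta a p) by apply Hn.
  destruct (grad_zero a p (gx p) (gz p) ha Hp (locally_singleton _ _ H1)) as [Gx Gz].
  destruct (locally_line _ p (0,1) H1) as [r [Hr Hl]].
  assert (Hz: forall t, 0 <= t < r -> gx (line p (0,1) t) = 0 /\ gz (line p (0,1) t) = 0).
  { intros t Ht. apply (grad_zero a (line p (0,1) t)). auto.
    destruct Hp as [Hp1 Hp2]. split; unfold line; cbn [fst snd]. 
    replace (fst p + t * 0) with (fst p) by ring. auto.
    replace (fst p + t * 0) with (fst p) by ring. lra.
    apply Hl. rewrite Rabs_right; lra. }
  destruct (fd_line_RR _ p (0,1) _ H2) as [D1 D2]. cbn [fst snd] in D1, D2.
  assert (E1: hxx * 0 + hxz * 1 = 0).
  { apply (one_sided_zero _ _ r D1 Hr). intros t Ht. apply Hz; auto. }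
  assert (E2: hzx * 0 + hzz * 1 = 0).
  { apply (one_sided_zero _ _ r D2 Hr). intros t Ht. apply Hz; auto. }
  rewrite Gz.
  replace (hxx * hzz - hxz * hzx) with 0 by (replace hxz with 0 by lra; replace hzz with 0 by lra; ring).
  unfold Rdiv. rewrite Rmult_0_l. lra.
Qed.

Lemma SC1 x : sin x ^ 2 + cos x ^ 2 = 1.
Proof. rewrite <- (sin2_cos2 x). unfold Rsqr. ring. Qed.

Lemma normal_line a p p0 t : 0 < a -> nearest a p p0 -> ~ Defs.Delta a p -> - eucl p p0 < t ->
  nearest a (line p (sin (th a (fst p0)), - cos (th a (fst p0))) t) p0 /\
  eucl (line p (sin (th a (fst p0)), - cos (th a (fst p0))) t) p0 = eucl p p0 + t.
Proof.
  intros ha Hn Hp Ht.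
  destruct (normal_struct a p p0 ha Hn Hp) as [_ [He [Ex Ez]]].
  set (e := eucl p p0) in *. set (S := sin (th a (fst p0))) in *. set (C := cos (th a (fst p0))) in *.
  assert (HSC: S^2 + C^2 = 1) by apply SC1. clearbody e S C.
  unfold line; cbn [fst snd]. split.
  - apply (nearest_ray a p p0 _ ((e+t)/e) ha Hn).
    apply Rlt_le, Rdiv_lt_0_compat; lra.
    cbn [fst snd]. replace (fst p + t * S - fst p0) with ((fst p - fst p0) + t*S) by ring. rewrite Ex. field. lra.
    cbn [fst snd]. replace (snd p + t * - C - snd p0) with ((snd p - snd p0) - t*C) by ring. rewrite Ez. field. lra.
  - unfold eucl; cbn [fst snd].
    replace (fst p + t * S - fst p0) with ((fst p - fst p0) + t*S) by ring.
    replace (snd p + t * - C - snd p0) with ((snd p - snd p0) - t*C) by ring.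
    rewrite Ex, Ez.
    replace ((e * S + t * S) ^ 2 + (- e * C - t * C) ^ 2) with ((e+t)^2 * (S^2 + C^2)) by ring.
    rewrite HSC, Rmult_1_r. apply sqrt_pow2. lra.
Qed.

Lemma notDelta a p : 0 < a -> 0 < dist_Delta a p -> ~ Defs.Delta a p.
Proof. intros ha H Hp. rewrite (dist_Delta0 a p ha Hp) in H. lra. Qed.

Lemma case2a a p (gx gz : R*R -> R) : 0 < a -> dist_Delta a p = 2*a ->
    locally p (fun q =>
      filterdiff (phi a) (locally q) (fun v => gx q * fst v + gz q * snd v)) -> False.
Proof.
  intros ha Hd H1.
  destruct (nearest_ex a p ha) as [p0 Hn].
  assert (Hp: ~ Defs.Delta a p) by (apply notDelta; lra).
  pose proof (nearest_dist a p p0 Hn) as Hd'. rewrite Hd in Hd'.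
  set (w := (sin (th a (fst p0)), - cos (th a (fst p0)))).
  pose proof (fd_line_R _ p w _ _ (locally_singleton _ _ H1)) as Df.
  set (l := gx p * fst w + gz p * snd w) in *. clearbody l.
  assert (Hf: forall t, - (2*a) < t -> phi a (line p w t) = -1 + 2*a - sqrt (4*a^2 - (2*a + t)^2)).
  { intros t Ht. destruct (normal_line a p p0 t ha Hn Hp ltac:(lra)) as [Hn' He'].
    fold w in Hn', He'. unfold phi. rewrite (nearest_dist _ _ _ Hn'). rewrite He', <- Hd'. reflexivity. }
  destruct (Df 1 ltac:(lra)) as [del Hdel].
  set (K := Rabs l + 1). assert (HKd: K = Rabs l + 1) by reflexivity.
  assert (HK: 1 <= K) by (unfold K; pose proof (Rabs_pos l); lra).
  set (u := Rmin (del/2) (a/(K^2+1))).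
  pose proof (cond_pos del).
  assert (HK2: 0 < K^2 + 1) by (pose proof (pow2_ge_0 K); lra).
  assert (Hu: 0 < u) by (unfold u; apply Rmin_glb_lt; [lra | apply Rdiv_lt_0_compat; lra]).
  assert (Hu1: u <= del/2) by apply Rmin_l.
  assert (Hu2: u <= a/(K^2+1)) by apply Rmin_r.
  assert (Hu3: (K^2+1)*u <= a).
  { apply Rmult_le_reg_r with (/(K^2+1)). apply Rinv_0_lt_compat; lra.
    replace ((K^2+1)*u*/(K^2+1)) with u by (field; lra). exact Hu2. }
  clearbody u K w.
  specialize (Hdel (-u) ltac:(lra) ltac:(rewrite Rabs_Ropp, Rabs_right; lra)).
  rewrite !Rplus_0_l in Hdel. assert (Hua: u <= a) by (assert (0 <= K^2*u) by (apply Rmult_le_pos; [apply pow2_ge_0|lra]); lra). rewrite !Hf in Hdel by lra.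
  replace (4 * a ^ 2 - (2 * a + 0) ^ 2) with 0 in Hdel by ring. rewrite sqrt_0 in Hdel.
  replace (4 * a ^ 2 - (2 * a + - u) ^ 2) with (4*a*u - u^2) in Hdel by ring.
  replace ((-1 + 2 * a - sqrt (4 * a * u - u ^ 2) - (-1 + 2 * a - 0)) / - u) with (sqrt (4 * a * u - u ^ 2) / u) in Hdel by (field; lra).
  assert (Hs: K * u <= sqrt (4 * a * u - u ^ 2)).
  { rewrite <- (sqrt_pow2 (K*u)) by nra. apply sqrt_le_1_alt.
    assert (K^2*u^2 + u^2 <= 4*a*u).
    { replace (K^2*u^2 + u^2) with (((K^2+1)*u)*u) by ring. apply Rmult_le_compat_r; lra. }
    replace ((K*u)^2) with (K^2*u^2) by ring. lra. }
  assert (K <= sqrt (4 * a * u - u ^ 2) / u).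
  { apply Rmult_le_reg_r with u; auto. unfold Rdiv. rewrite Rmult_assoc, Rinv_l, Rmult_1_r; lra. }
  apply abs_lt in Hdel. pose proof (Rle_abs l). lra.
Qed.

Lemma th_diff a x y : 0 < a -> th a x - th a y = a*PI/2 * (x - y).
Proof. intros; unfold th; ring. Qed.

Lemma tangent_bound a p p0 (gx gz : R*R -> R) e : 0 < a -> nearest a p p0 -> ~ Defs.Delta a p ->
  0 < e -> e < eucl p p0 / 2 -> eucl p p0 + e < 2*a ->
  filterdiff (phi a) (locally (line p (cos (th a (fst p0)), sin (th a (fst p0))) e))
    (fun v => gx (line p (cos (th a (fst p0)), sin (th a (fst p0))) e) * fst v
            + gz (line p (cos (th a (fst p0)), sin (th a (fst p0))) e) * snd v) ->
  cos (th a (fst p0)) * gx (line p (cos (th a (fst p0)), sin (th a (fst p0))) e)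
  + sin (th a (fst p0)) * gz (line p (cos (th a (fst p0)), sin (th a (fst p0))) e)
  <= e * ((eucl p p0 + e) / sqrt (4*a^2 - (eucl p p0 + e)^2) * (a*PI/2) * (cos (th a (fst p0)) + a*PI/2*e)).
Proof.
  intros ha Hn Hp He He1 He2 Hf.
  pose proof PI_RGT_0 as HPI.
  set (C := cos (th a (fst p0))) in *. set (S := sin (th a (fst p0))) in *.
  set (q := line p (C, S) e) in *.
  set (c := a*PI/2).
  assert (Hc: 0 < c) by (unfold c; nra).
  assert (HSC: S^2 + C^2 = 1) by apply SC1.
  destruct (normal_struct a p p0 ha Hn Hp) as [Hz0 [Hd0 [Ex0 Ez0]]].
  set (d := eucl p p0) in *.
  pose proof (nearest_dist a p p0 Hn) as Hdp. fold d in Hdp.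
  assert (Hqp: eucl q p = e).
  { unfold q, line, eucl; cbn [fst snd].
    replace ((fst p + e * C - fst p) ^ 2 + (snd p + e * S - snd p) ^ 2) with (e^2 * (S^2 + C^2)) by ring.
    rewrite HSC, Rmult_1_r. apply sqrt_pow2; lra. }
  pose proof (dist_lip a q p ha) as L1. pose proof (dist_lip a p q ha) as L2.
  rewrite eucl_sym in L2. rewrite Hqp, Hdp in L1, L2.
  set (de := dist_Delta a q) in *.
  assert (Hde: 0 < de) by lra.
  assert (Hq: ~ Defs.Delta a q) by (apply notDelta; auto).
  destruct (nearest_ex a q ha) as [p1 Hn1].
  pose proof (nearest_dist a q p1 Hn1) as Hdq. fold de in Hdq.
  destruct (normal_struct a q p1 ha Hn1 Hq) as [Hz1 [Hd1 [Ex1 Ez1]]].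
  rewrite <- Hdq in Ex1, Ez1.
  destruct (grad_id a q p1 _ _ ha Hn1 ltac:(lra) Hf) as [Gx Gz].
  rewrite <- Hdq in Gx, Gz. rewrite Gx, Gz, Ex1, Ez1.
  set (x0 := fst p0) in *. set (x1 := fst p1) in *.
  assert (Hx0: - (PI/2) < th a x0 < PI/2) by (apply th_range; auto; apply (proj1 Hn)).
  assert (Hx1: - (PI/2) < th a x1 < PI/2) by (apply th_range; auto; apply (proj1 Hn1)).
  set (se := sqrt (4 * a ^ 2 - de ^ 2)).
  assert (Hse: 0 < se) by (apply sqrt_lt_R0; nra).
  set (S1 := sin (th a x1)) in *. set (C1 := cos (th a x1)) in *.
  replace (C * (de * S1 / se) + S * (- de * C1 / se)) with ((de/se) * sin (th a x1 - th a x0))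
    by (rewrite sin_minus; fold S1 C1; fold x0 C S; field; lra).
  pose proof (proj_lip a q p1 p p0 ha Hn1 Hn) as PL.
  replace ((fst q - fst p) ^ 2 + (snd q - snd p) ^ 2) with (e^2) in PL
    by (rewrite <- eucl_sq, Hqp; reflexivity).
  fold x0 x1 in PL. rewrite Hz1, Hz0 in PL. fold x0 x1 in PL.
  destruct (mvt_bnd a x0 x1 ha Hx0 Hx1) as [xi [Hxi1 [Hxi2 Hxi3]]].
  rewrite Hxi3 in PL.
  set (Cx := cos (th a xi)).
  assert (HCx: 0 < Cx) by (apply cos_gt_0; lra).
  assert (HCx1: Cx <= 1) by apply COS_bound.
  assert (Htan: tan (th a xi) = sin (th a xi) / Cx) by reflexivity.
  assert (HSCx: sin (th a xi) ^2 + Cx^2 = 1) by apply SC1.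
  assert (Hx10: (x1 - x0)^2 <= (e * Cx)^2).
  { rewrite Htan in PL.
    replace ((x1 - x0) ^ 2 + (sin (th a xi) / Cx * (x1 - x0)) ^ 2) with ((x1 - x0)^2 * (sin (th a xi)^2 + Cx^2) / Cx^2) in PL
      by (field; lra). rewrite HSCx, Rmult_1_r in PL.
    replace ((e*Cx)^2) with (e^2 * Cx^2) by ring.
    apply Rmult_le_reg_r with (/ Cx^2). apply Rinv_0_lt_compat; nra.
    replace (e^2 * Cx^2 * / Cx^2) with (e^2) by (field; lra). exact PL. }
  assert (Hax: Rabs (x1 - x0) <= e * Cx).
  { rewrite <- (Rabs_right (e*Cx)) by nra. apply Rsqr_le_abs_0. unfold Rsqr. nra. }
  assert (HCxb: Cx <= C + c * e).
  { pose proof (cos_lip (th a xi) (th a x0)) as CL. fold Cx C in CL.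
    rewrite th_diff in CL by auto. fold c in CL. rewrite Rabs_mult, (Rabs_right c) in CL by lra.
    assert (Rabs (xi - x0) <= e) by nra.
    assert (c * Rabs (xi - x0) <= c * e) by (apply Rmult_le_compat_l; lra). lra. }
  assert (Hsin: sin (th a x1 - th a x0) <= c * (e * (C + c * e))).
  { eapply Rle_trans. apply sin_le_abs. rewrite th_diff by auto. fold c.
    rewrite Rabs_mult, (Rabs_right c) by lra. apply Rmult_le_compat_l. lra.
    eapply Rle_trans. apply Hax. apply Rmult_le_compat_l; lra. }
  assert (Hrat: de / se <= (d + e) / sqrt (4 * a ^ 2 - (d + e) ^ 2)).
  { apply ratio_mono; lra. }
  assert (Hrat0: 0 <= de / se) by (apply Rlt_le, Rdiv_lt_0_compat; lra).
  assert (HCpos: 0 <= C + c * e).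
  { pose proof (cos_ge_0 (th a x0)) . fold C in H. assert (0 <= c*e) by nra. lra. }
  apply Rle_trans with ((de/se) * (c * (e * (C + c * e)))).
  apply Rmult_le_compat_l; auto.
  replace (e * ((d + e) / sqrt (4 * a ^ 2 - (d + e) ^ 2) * c * (C + c * e)))
    with (((d + e) / sqrt (4 * a ^ 2 - (d + e) ^ 2)) * (c * (e * (C + c * e)))) by ring.
  apply Rmult_le_compat_r; auto.
  apply Rmult_le_pos. lra. apply Rmult_le_pos; lra.
Qed.

Lemma lin_comb f g x l1 l2 A B : derivable_pt_lim f x l1 -> derivable_pt_lim g x l2 ->
  derivable_pt_lim (fun y => A * f y + B * g y) x (A*l1 + B*l2).
Proof.
  intros H1 H2.
  exact (derivable_pt_lim_plus _ _ x _ _ (derivable_pt_lim_scal f A x l1 H1) (derivable_pt_lim_scal g B x l2 H2)).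
Qed.

Lemma casemain a p (gx gz : R*R -> R) hxx hxz hzx hzz : 0 < a -> 0 < dist_Delta a p < 2*a ->
    locally p (fun q =>
      filterdiff (phi a) (locally q) (fun v => gx q * fst v + gz q * snd v)) ->
    filterdiff (fun q => (gx q, gz q)) (locally p)
      (fun v => (hxx * fst v + hxz * snd v, hzx * fst v + hzz * snd v)) ->
    (hxx * hzz - hxz * hzx) / Rpower (1 + gx p ^ 2 + gz p ^ 2) (3 / 2)
      <= - (PI / 4) * gz p.
Proof.
  intros ha Hd H1 H2.
  pose proof PI_RGT_0 as HPI.
  destruct (nearest_ex a p ha) as [p0 Hn].
  assert (Hp: ~ Defs.Delta a p) by (apply notDelta; lra).
  pose proof (nearest_dist a p p0 Hn) as Hdp.
  destruct (normal_struct a p p0 ha Hn Hp) as [Hz0 [Hd0 [Ex0 Ez0]]].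
  assert (Hx0: - (PI/2) < th a (fst p0) < PI/2) by (apply th_range; auto; apply (proj1 Hn)).
  pose proof (SC1 (th a (fst p0))) as HSC.
  assert (HC: 0 < cos (th a (fst p0))) by (apply cos_gt_0; lra).
  destruct (grad_id a p p0 _ _ ha Hn ltac:(lra) (locally_singleton _ _ H1)) as [Gx Gz].
  (* normal direction *)
  destruct (locally_line _ p (sin (th a (fst p0)), - cos (th a (fst p0))) H1) as [r1 [Hr1 Hl1]].
  destruct (fd_line_RR _ p (sin (th a (fst p0)), - cos (th a (fst p0))) _ H2) as [D1 D2].
  cbn [fst snd] in D1, D2.
  set (d := eucl p p0) in *.
  set (r := Rmin r1 (Rmin d (2*a - d))).
  assert (Hr: 0 < r) by (unfold r; repeat apply Rmin_glb_lt; lra).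
  assert (Hr': forall t, Rabs t < r -> Rabs t < r1 /\ - d < t /\ d + t < 2*a).
  { intros t Ht. unfold r in Ht.
    pose proof (Rmin_l r1 (Rmin d (2*a - d))). pose proof (Rmin_r r1 (Rmin d (2*a - d))).
    pose proof (Rmin_l d (2*a - d)). pose proof (Rmin_r d (2*a - d)). apply abs_lt in Ht as Ht'.
    split; [lra|split; lra]. }
  assert (Gn: forall t, Rabs t < r ->
     gx (line p (sin (th a (fst p0)), - cos (th a (fst p0))) t) = (d + t) * sin (th a (fst p0)) / sqrt (4*a^2 - (d+t)^2) /\
     gz (line p (sin (th a (fst p0)), - cos (th a (fst p0))) t) = (d + t) * (- cos (th a (fst p0))) / sqrt (4*a^2 - (d+t)^2)).
  { intros t Ht. destruct (Hr' t Ht) as [T1 [T2 T3]].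
    destruct (normal_line a p p0 t ha Hn Hp T2) as [Hnt Het]. fold d in Het.
    destruct (grad_id a _ p0 _ _ ha Hnt ltac:(lra) (Hl1 t T1)) as [Gx' Gz'].
    rewrite Het in Gx', Gz'. rewrite Gx', Gz'. unfold line; cbn [fst snd].
    split; f_equal.
    - replace (fst p + t * sin (th a (fst p0)) - fst p0) with ((fst p - fst p0) + t * sin (th a (fst p0))) by ring.
      rewrite Ex0. fold d. ring.
    - replace (snd p + t * - cos (th a (fst p0)) - snd p0) with ((snd p - snd p0) + t * - cos (th a (fst p0))) by ring.
      rewrite Ez0. fold d. ring. }
  pose proof (deriv_normal a d (sin (th a (fst p0))) ltac:(lra)) as N1.
  pose proof (deriv_normal a d (- cos (th a (fst p0))) ltac:(lra)) as N2.
  set (K := 4 * a ^ 2 / sqrt (4 * a ^ 2 - d ^ 2) ^ 3) in *.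
  assert (E1: hxx * sin (th a (fst p0)) + hxz * - cos (th a (fst p0)) = sin (th a (fst p0)) * K).
  { apply (uniqueness_limite _ 0 _ _ D1).
    apply (deriv_ext0 _ _ _ r N1 Hr). intros t Ht. symmetry. apply (Gn t Ht). }
  assert (E2: hzx * sin (th a (fst p0)) + hzz * - cos (th a (fst p0)) = - cos (th a (fst p0)) * K).
  { apply (uniqueness_limite _ 0 _ _ D2).
    apply (deriv_ext0 _ _ _ r N2 Hr). intros t Ht. symmetry. apply (Gn t Ht). }
  (* tangent direction *)
  destruct (locally_line _ p (cos (th a (fst p0)), sin (th a (fst p0))) H1) as [r2 [Hr2 Hl2]].
  destruct (fd_line_RR _ p (cos (th a (fst p0)), sin (th a (fst p0))) _ H2) as [D3 D4].
  cbn [fst snd] in D3, D4.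
  pose proof (lin_comb _ _ 0 _ _ (cos (th a (fst p0))) (sin (th a (fst p0))) D3 D4) as DU.
  set (T := cos (th a (fst p0)) * (hxx * cos (th a (fst p0)) + hxz * sin (th a (fst p0))) +
            sin (th a (fst p0)) * (hzx * cos (th a (fst p0)) + hzz * sin (th a (fst p0)))) in DU.
  set (c := a * PI / 2).
  set (F := fun e => (d + e) / sqrt (4*a^2 - (d+e)^2) * c * (cos (th a (fst p0)) + c*e)).
  assert (HT: T <= F 0).
  { apply (upper_lim _ F T (Rmin r2 (Rmin (d/2) ((2*a - d)/2))) DU).
    - cbn beta. rewrite line0, Gx, Gz, Ex0, Ez0. fold d. field. apply Rgt_not_eq, sqrt_lt_R0. nra.
    - repeat apply Rmin_glb_lt; lra.
    - intros e He.
      pose proof (Rmin_l r2 (Rmin (d/2) ((2*a - d)/2))). pose proof (Rmin_r r2 (Rmin (d/2) ((2*a - d)/2))).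
      pose proof (Rmin_l (d/2) ((2*a - d)/2)). pose proof (Rmin_r (d/2) ((2*a - d)/2)).
      assert (Hfe := Hl2 e ltac:(rewrite Rabs_right; lra)).
      pose proof (tangent_bound a p p0 gx gz e ha Hn Hp ltac:(lra) ltac:(fold d; lra) ltac:(fold d; lra) Hfe) as TB.
      fold d c in TB. cbn beta. unfold F. exact TB.
    - apply F_cont. lra. }
  unfold F in HT. rewrite !Rplus_0_r, Rmult_0_r, Rplus_0_r in HT.
  set (S := sin (th a (fst p0))) in *. set (C := cos (th a (fst p0))) in *.
  set (s0 := sqrt (4 * a ^ 2 - d ^ 2)) in *.
  assert (Hs0: 0 < s0) by (apply sqrt_lt_R0; nra).
  assert (Hs02: s0^2 = 4*a^2 - d^2) by (apply pow2_sqrt; nra).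
  rewrite Gx, Gz, Ex0, Ez0. fold d.
  assert (Hden: 1 + (d * S / s0) ^ 2 + (- d * C / s0) ^ 2 = (2*a/s0)^2).
  { replace (1 + (d * S / s0) ^ 2 + (- d * C / s0) ^ 2) with ((s0^2 + d^2 * (S^2 + C^2))/s0^2) by (field; lra).
    rewrite HSC. replace (s0^2 + d^2*1) with (4*a^2) by lra. field. lra. }
  rewrite Hden, Rpower_32 by (apply pow_lt; apply Rdiv_lt_0_compat; lra).
  rewrite sqrt_pow2 by (apply Rlt_le, Rdiv_lt_0_compat; lra).
  assert (Hdet: hxx * hzz - hxz * hzx = K * T).
  { assert (KT: K * T = (K*S)*(hzx*C + hzz*S) + (K*C)*(hxx*C + hxz*S)) by (unfold T; ring).
    replace (K*S) with (hxx * S + hxz * - C) in KT by lra.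
    replace (K*C) with (-(hzx * S + hzz * - C)) in KT by lra.
    rewrite KT. replace (hxx * hzz - hxz * hzx) with ((hxx * hzz - hxz * hzx) * (S^2 + C^2)) by (rewrite HSC; ring).
    ring. }
  rewrite Hdet.
  assert (HK: 0 < K) by (unfold K; apply Rdiv_lt_0_compat; [nra | apply pow_lt; lra]).
  assert (Hden2: 0 < (2 * a / s0) ^ 2 * (2 * a / s0)) by (apply Rmult_lt_0_compat; [apply pow_lt|]; apply Rdiv_lt_0_compat; lra).
  apply Rle_trans with (K * (d / s0 * c * C) / ((2 * a / s0) ^ 2 * (2 * a / s0))).
  { unfold Rdiv. apply Rmult_le_compat_r. left; apply Rinv_0_lt_compat; lra.
    apply Rmult_le_compat_l; lra. }
  right. unfold K, c. field. lra.
Qed.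


Theorem lemma4p3 (a : R) (ha : 0 < a < 1 / 6) :
  convex_on (dom_phi a) (phi a) /\
  forall (p : R * R) (gx gz : R * R -> R) (hxx hxz hzx hzz : R),
    dom_phi a p ->
    (* phi is differentiable near p with gradient (gx, gz) *)
    locally p (fun q =>
      filterdiff (phi a) (locally q) (fun v => gx q * fst v + gz q * snd v)) ->
    (* the gradient is differentiable at p, with Hessian [[hxx hxz];[hzx hzz]] *)
    filterdiff (fun q => (gx q, gz q)) (locally p)
      (fun v => (hxx * fst v + hxz * snd v, hzx * fst v + hzz * snd v)) ->
    (hxx * hzz - hxz * hzx) / Rpower (1 + gx p ^ 2 + gz p ^ 2) (3 / 2)
      <= - (PI / 4) * gz p.
Proof.
  assert (ha0: 0 < a) by lra. split. apply part1; auto.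
  intros p gx gz hxx hxz hzx hzz Hdom H1 H2.
  pose proof (dom_le a p ha0 Hdom). pose proof (dist_ge0 a p ha0).
  destruct (Req_dec (dist_Delta a p) 0) as [h0|h0]. apply (case0 a); auto.
  destruct (Req_dec (dist_Delta a p) (2*a)) as [h2|h2]. exfalso; apply (case2a a p gx gz); auto.
  apply (casemain a); auto; lra.
Qed.
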